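(* Let $\sigma>0$, $\eta>0$, $\hat\alpha>0$, $h>0$, $r\ge0$, $a\in\mathbb{R}$, and for $\beta\ge0$ let $v_\beta$ denote the unique $C^1[0,\infty)$ solution of $\frac{\sigma^2}2v'(y)=\beta+\frac{\hat\alpha}4v(y)^2+\eta y(v(y)-\frac h\eta)-av(y)$, $y\ge0$, $v(0)=-r$. Let $\underline\beta_2=-ar-\frac{\hat\alpha r^2}4$. Then: (i) if $a>-\frac{\hat\alpha}4r$ and $\beta\ge0$, then $\beta\in\mathcal D_1$ if and only if there exists $x_0\in(0,\infty)$ with $v_\beta'(x_0)<0$; (ii) if $a\le-\frac{\hat\alpha}4r$ and $\beta>\underline\beta_2$, then $\beta\in\mathcal D_2$ if and only if there exists $x_0\in(0,\infty)$ with $v_\beta'(x_0)<0$.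
   Context: $\mathcal D_1=\{\beta\ge0:\exists x_\beta\ge0$ such that $v_\beta$ is nondecreasing on $(0,x_\beta)$ and decreasing on $(x_\beta,\infty)\}$ and $\mathcal D_2=\{\beta>\underline\beta_2:\exists x_\beta\ge0$ such that $v_\beta$ is nondecreasing on $(0,x_\beta)$ and decreasing on $(x_\beta,\infty)\}$. *)

(* Defs.v *)
From Stdlib Require Import Reals Lra.
From Coquelicot Require Import Coquelicot.
Open Scope R_scope.

(* Right-hand side of the ODE, already divided by sigma^2/2:
   v'(y) = (2/sigma^2) * (beta + alpha/4 v^2 + eta y (v - h/eta) - a v). *)
Definition ode_rhs (sigma eta alpha h a beta y w : R) : R :=
  (2 / sigma ^ 2) * (beta + alpha / 4 * w ^ 2 + eta * y * (w - h / eta) - a * w).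

(* v is a C^1[0,oo) solution of the ODE with v(0) = -r:
   v(0) = -r, v is right-continuous at 0, v has a right derivative at 0
   equal to the RHS, and v is differentiable at every y > 0 with derivative
   given by the RHS (continuity of v' then follows from the equation). *)
Definition is_sol (sigma eta alpha h r a beta : R) (v : R -> R) : Prop :=
  v 0 = - r /\
  filterlim v (at_right 0) (locally (- r)) /\
  filterlim (fun y => (v y - v 0) / y) (at_right 0)
    (locally (ode_rhs sigma eta alpha h a beta 0 (v 0))) /\
  (forall y, 0 < y -> is_derive v y (ode_rhs sigma eta alpha h a beta y (v y))).

Definition unimodal (v : R -> R) : Prop :=
  exists x, 0 <= x /\
    (forall y z, 0 < y -> y <= z -> z < x -> v y <= v z) /\
    (forall y z, x < y -> y < z -> v z < v y).

Definition beta2_low (alpha r a : R) : R := - a * r - alpha * r ^ 2 / 4.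

Definition in_D1 (beta : R) (v : R -> R) : Prop := 0 <= beta /\ unimodal v.
Definition in_D2 (alpha r a beta : R) (v : R -> R) : Prop :=
  beta2_low alpha r a < beta /\ unimodal v.

(* Main.v *)
Require Import Defs.
From Stdlib Require Import Reals Lra Classical.
From Coquelicot Require Import Coquelicot.
Open Scope R_scope.

Lemma loc_pos f x l : is_derive f x l -> 0 < l ->
  exists d, 0 < d /\ (forall y, x - d < y < x -> f y < f x) /\
                     (forall y, x < y < x + d -> f x < f y).
Proof.
  intros H Hl. apply is_derive_Reals in H.
  destruct (H l Hl) as [d Hd]. exists d. split; [apply cond_pos|].
  split; intros y Hy;
  (assert (Hne : y - x <> 0) by lra);
  (assert (Hab : Rabs (y - x) < d) by (apply Rabs_def1; lra));
  specialize (Hd (y - x) Hne Hab);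
  replace (x + (y - x)) with y in Hd by ring;
  apply Rabs_def2 in Hd;
  set (q := (f y - f x) / (y - x)) in Hd;
  (assert (Hq : f y - f x = q * (y - x)) by (unfold q; field; lra));
  nra.
Qed.

Lemma loc_neg f x l : is_derive f x l -> l < 0 ->
  exists d, 0 < d /\ (forall y, x - d < y < x -> f x < f y) /\
                     (forall y, x < y < x + d -> f y < f x).
Proof.
  intros H Hl. apply is_derive_opp in H.
  assert (Hol : 0 < opp l) by (unfold opp; simpl; lra).
  destruct (loc_pos _ _ _ H Hol) as [d [Hd [H1 H2]]].
  exists d; split; [lra|]; split; intros y Hy; [specialize (H1 y Hy) | specialize (H2 y Hy)]; unfold opp in *; simpl in *; lra.
Qed.

Lemma W_deriv sigma eta alpha h a beta (v:R->R) y dv : sigma <> 0 -> eta <> 0 ->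
  is_derive v y dv ->
  is_derive (fun y => ode_rhs sigma eta alpha h a beta y (v y)) y
   ((2/sigma^2) * (alpha/2 * v y * dv + eta * (v y - h/eta) + eta*y*dv - a*dv)).
Proof.
intros Hs He H. unfold ode_rhs. auto_derive.
repeat split; eexists; eauto.
replace (Derive (fun x => v x) y) with dv by (symmetry; apply is_derive_unique; auto).
field; auto.
Qed.

Lemma rc_lemma r e (v:R->R) : 0 < e -> filterlim v (at_right 0) (locally (- r)) ->
  exists d, 0<d /\ forall y, 0<y<d -> Rabs (v y + r) < e.
Proof.
intros He H. apply filterlim_locally with (eps := mkposreal e He) in H.
destruct H as [d Hd]. exists d. split. apply cond_pos. intros y Hy.
specialize (Hd y). unfold ball in Hd; simpl in Hd; unfold AbsRing_ball, abs, minus, plus, opp in Hd; simpl in Hd.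
replace (v y + r) with (v y + - - r) by ring. apply Hd; [|lra].
replace (y + - 0) with y by ring. rewrite Rabs_pos_eq; lra.
Qed.

Lemma mvt_abs (v W : R -> R) (Hd : forall y, 0 < y -> is_derive v y (W y)) y z :
  0 < y -> y < z -> exists c, v z - v y = W c * (z - y) /\ y < c < z.
Proof.
intros Hy Hyz. apply MVT_cor2; auto. intros c Hc. apply is_derive_Reals, Hd. lra.
Qed.

Lemma cont_abs (v W : R -> R) (Hd : forall y, 0 < y -> is_derive v y (W y)) y :
  0 < y -> continuity_pt v y.
Proof.
intros Hy. apply derivable_continuous_pt. exists (W y). apply is_derive_Reals, Hd, Hy.
Qed.

Lemma B_abs (v W : R -> R) K
  (Hd : forall y, 0 < y -> is_derive v y (W y))
  (HW : forall y, 0 < y -> W y = 0 -> exists l, is_derive W y l /\ (v y < K -> l < 0) /\ (K < v y -> 0 < l)) :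
  (exists d, 0 < d /\ forall y, 0 < y < d -> v y < K) ->
  forall y0, 0 < y0 -> W y0 < 0 -> v y0 <= K.
Proof.
intros [d [Hd0 Hsm]] y0 Hy0 Hw0.
destruct (Rle_or_lt (v y0) K) as [Hle|Hgt]; auto. exfalso.
set (d1 := Rmin (d/2) (y0/2)).
assert (Hd1a : d1 <= d/2) by apply Rmin_l.
assert (Hd1b : d1 <= y0/2) by apply Rmin_r.
assert (Hd1c : 0 < d1) by (apply Rmin_glb_lt; lra).
assert (Hvd1 : v d1 < K) by (apply Hsm; lra).
destruct (continuity_ab_maj v d1 y0) as [ym [Hmax Hym]]. lra.
intros c Hc; apply (cont_abs v W Hd); lra.
destruct (loc_neg v y0 (W y0) (Hd y0 Hy0) Hw0) as [e [He [Hl _]]].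
set (y := Rmax (y0 - e/2) ((d1+y0)/2)).
assert (y0 - e/2 <= y) by apply Rmax_l.
assert ((d1+y0)/2 <= y) by apply Rmax_r.
assert (y < y0) by (apply Rmax_lub_lt; lra).
assert (v y0 < v y) by (apply Hl; lra).
assert (v y <= v ym) by (apply Hmax; lra).
assert (Hne1 : ym <> d1) by (intro E; rewrite E in *; lra).
assert (Hne2 : ym <> y0) by (intro E; rewrite E in *; lra).
assert (Hin : d1 < ym < y0) by lra.
destruct (Rtotal_order (W ym) 0) as [Hlt|[Heq|Hgt']].
- destruct (loc_neg v ym (W ym) (Hd ym ltac:(lra)) Hlt) as [e' [He' [Hl' _]]].
  set (y' := Rmax (ym - e'/2) ((d1+ym)/2)).
  assert (ym - e'/2 <= y') by apply Rmax_l.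
  assert ((d1+ym)/2 <= y') by apply Rmax_r.
  assert (y' < ym) by (apply Rmax_lub_lt; lra).
  assert (v ym < v y') by (apply Hl'; lra).
  assert (v y' <= v ym) by (apply Hmax; lra). lra.
- destruct (HW ym ltac:(lra) Heq) as [l [Hdl [_ Hpos]]].
  destruct (loc_pos W ym l Hdl (Hpos ltac:(lra))) as [e' [He' [Hl' _]]].
  set (y' := Rmax (ym - e'/2) ((d1+ym)/2)).
  assert (ym - e'/2 <= y') by apply Rmax_l.
  assert ((d1+ym)/2 <= y') by apply Rmax_r.
  assert (y' < ym) by (apply Rmax_lub_lt; lra).
  destruct (mvt_abs v W Hd y' ym) as [c [Hc Hcb]]; try lra.
  assert (W c < W ym) by (apply Hl'; lra).
  assert (v y' <= v ym) by (apply Hmax; lra). nra.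
- destruct (loc_pos v ym (W ym) (Hd ym ltac:(lra)) Hgt') as [e' [He' [_ Hr']]].
  set (y' := Rmin (ym + e'/2) ((ym+y0)/2)).
  assert (y' <= ym + e'/2) by apply Rmin_l.
  assert (y' <= (ym+y0)/2) by apply Rmin_r.
  assert (ym < y') by (apply Rmin_glb_lt; lra).
  assert (v ym < v y') by (apply Hr'; lra).
  assert (v y' <= v ym) by (apply Hmax; lra). lra.
Qed.

Lemma C_abs (v W : R -> R) K
  (Hd : forall y, 0 < y -> is_derive v y (W y))
  (HW : forall y, 0 < y -> W y = 0 -> exists l, is_derive W y l /\ (v y < K -> l < 0) /\ (K < v y -> 0 < l))
  (HB : forall y0, 0 < y0 -> W y0 < 0 -> v y0 <= K) :
  forall y0 y2, 0 < y0 -> y0 < y2 -> W y0 < 0 -> W y2 < 0.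
Proof.
intros y0 y2 Hy0 Hy02 Hw0.
destruct (Rlt_or_le (W y2) 0) as [Hlt2|Hge2]; auto. exfalso.
pose proof (HB y0 Hy0 Hw0) as HK.
destruct (continuity_ab_min v y0 y2) as [ym [Hmin Hym]]. lra.
intros c Hc; apply (cont_abs v W Hd); lra.
destruct (loc_neg v y0 (W y0) (Hd y0 Hy0) Hw0) as [e [He [_ Hr]]].
set (y := Rmin (y0 + e/2) y2).
assert (y <= y0 + e/2) by apply Rmin_l.
assert (y <= y2) by apply Rmin_r.
assert (y0 < y) by (apply Rmin_glb_lt; lra).
assert (v y < v y0) by (apply Hr; lra).
assert (v ym <= v y) by (apply Hmin; lra).
assert (Hne2 : ym <> y0) by (intro E; rewrite E in *; lra).
assert (Hin : y0 < ym <= y2) by lra.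
destruct (Rtotal_order (W ym) 0) as [Hlt|[Heq|Hgt']].
- destruct (Req_dec ym y2) as [E|E]. { rewrite E in Hlt; lra. }
  destruct (loc_neg v ym (W ym) (Hd ym ltac:(lra)) Hlt) as [e' [He' [_ Hr']]].
  set (y' := Rmin (ym + e'/2) ((ym+y2)/2)).
  assert (y' <= ym + e'/2) by apply Rmin_l.
  assert (y' <= (ym+y2)/2) by apply Rmin_r.
  assert (ym < y') by (apply Rmin_glb_lt; lra).
  assert (v y' < v ym) by (apply Hr'; lra).
  assert (v ym <= v y') by (apply Hmin; lra). lra.
- destruct (HW ym ltac:(lra) Heq) as [l [Hdl [Hneg _]]].
  destruct (loc_neg W ym l Hdl (Hneg ltac:(lra))) as [e' [He' [Hl' _]]].
  set (y' := Rmax (ym - e'/2) ((y0+ym)/2)).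
  assert (ym - e'/2 <= y') by apply Rmax_l.
  assert ((y0+ym)/2 <= y') by apply Rmax_r.
  assert (y' < ym) by (apply Rmax_lub_lt; lra).
  destruct (mvt_abs v W Hd y' ym) as [c [Hc Hcb]]; try lra.
  assert (W ym < W c) by (apply Hl'; lra).
  assert (v ym <= v y') by (apply Hmin; lra). nra.
- destruct (loc_pos v ym (W ym) (Hd ym ltac:(lra)) Hgt') as [e' [He' [Hl' _]]].
  set (y' := Rmax (ym - e'/2) ((y0+ym)/2)).
  assert (ym - e'/2 <= y') by apply Rmax_l.
  assert ((y0+ym)/2 <= y') by apply Rmax_r.
  assert (y' < ym) by (apply Rmax_lub_lt; lra).
  assert (v y' < v ym) by (apply Hl'; lra).
  assert (v ym <= v y') by (apply Hmin; lra). lra.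
Qed.

Lemma unimodal_abs (v W : R -> R)
  (Hd : forall y, 0 < y -> is_derive v y (W y))
  (HC : forall y0 y2, 0 < y0 -> y0 < y2 -> W y0 < 0 -> W y2 < 0) :
  (exists x0, 0 < x0 /\ W x0 < 0) -> unimodal v.
Proof.
intros [x0 [Hx0 Hw0]].
set (E := fun t => forall y, 0 < y -> W y < 0 -> t <= y).
assert (Hb : bound E) by (exists x0; intros t Ht; apply Ht; auto).
assert (HE0 : exists t, E t) by (exists 0; intros y Hy _; lra).
destruct (completeness E Hb HE0) as [m [Hub Hlub]].
assert (Hm0 : 0 <= m) by (apply Hub; intros y Hy _; lra).
assert (F1 : forall y, m < y -> W y < 0).
{ intros y Hy. destruct (classic (exists y', 0 < y' /\ W y' < 0 /\ y' < y)) as [[y' [H1 [H2 H3]]]|Hn].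
  - apply (HC y'); auto.
  - exfalso. assert (E y). { intros y'' H1 H2. destruct (Rle_or_lt y y''); auto.
      exfalso; apply Hn; exists y''; auto. }
    assert (y <= m) by (apply Hub; auto). lra. }
assert (F2 : forall y, 0 < y < m -> 0 <= W y).
{ intros y Hy. destruct (Rle_or_lt 0 (W y)); auto. exfalso.
  assert (m <= y). { apply Hlub. intros t Ht. apply Ht; lra. } lra. }
exists m. split; auto. split.
- intros y z Hy Hyz Hz. destruct (Req_dec y z) as [->|Hne]; [lra|].
  destruct (mvt_abs v W Hd y z) as [c [Hc Hcb]]; try lra.
  assert (0 <= W c) by (apply F2; lra). nra.
- intros y z Hy Hz.
  destruct (mvt_abs v W Hd y z) as [c [Hc Hcb]]; try lra.
  assert (W c < 0) by (apply F1; lra). nra.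
Qed.

Lemma unimodal_conv (v W : R -> R)
  (Hd : forall y, 0 < y -> is_derive v y (W y)) :
  unimodal v -> exists x0, 0 < x0 /\ W x0 < 0.
Proof.
intros [x [Hx [_ Hdec]]].
destruct (mvt_abs v W Hd (x+1) (x+2)) as [c [Hc Hcb]]; try lra.
assert (v (x+2) < v (x+1)) by (apply Hdec; lra).
exists c. split; [lra|]. nra.
Qed.

Lemma key sigma eta alpha h r a beta v (Hsigma : 0 < sigma) (Heta : 0 < eta) (Hh : 0 < h)
  (Hr : 0 <= r) : is_sol sigma eta alpha h r a beta v ->
  (unimodal v <-> exists x0, 0 < x0 /\ Derive v x0 < 0).
Proof.
intros [Hv0 [Hrc [_ Hd]]].
set (W := fun y => ode_rhs sigma eta alpha h a beta y (v y)).
assert (Hd' : forall y, 0 < y -> is_derive v y (W y)) by exact Hd.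
assert (HDer : forall y, 0 < y -> Derive v y = W y) by (intros; apply is_derive_unique; auto).
assert (HW : forall y, 0 < y -> W y = 0 -> exists l, is_derive W y l /\
   (v y < h/eta -> l < 0) /\ (h/eta < v y -> 0 < l)).
{ intros y Hy H0. eexists. split.
  - apply (W_deriv sigma eta alpha h a beta v y (W y)); try lra. apply Hd'; auto.
  - rewrite H0. assert (0 < 2 / sigma ^ 2) by (apply Rdiv_lt_0_compat; [lra| apply pow_lt; lra]).
    replace (2 / sigma ^ 2 * (alpha / 2 * v y * 0 + eta * (v y - h / eta) + eta * y * 0 - a * 0))
      with (2 / sigma ^ 2 * (v y * eta - h)) by (field; lra).
    assert (Hhe : h / eta * eta = h) by (field; lra).
    split; intro Hlt.
    + assert (v y * eta < h/eta*eta) by (apply Rmult_lt_compat_r; auto). nra.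
    + assert (h/eta*eta < v y * eta) by (apply Rmult_lt_compat_r; auto). nra. }
assert (HB : forall y0, 0 < y0 -> W y0 < 0 -> v y0 <= h/eta).
{ apply (B_abs v W); auto.
  assert (0 < h/eta) by (apply Rdiv_lt_0_compat; lra).
  destruct (rc_lemma r (h/eta) v) as [d [Hd0 Hdd]]; auto.
  exists d; split; auto. intros y Hy. specialize (Hdd y Hy).
  apply Rabs_def2 in Hdd. lra. }
assert (HC := C_abs v W (h/eta) Hd' HW HB).
split.
- intro U. destruct (unimodal_conv v W Hd' U) as [x0 [Hx0 Hw]].
  exists x0; split; auto. rewrite HDer; auto.
- intros [x0 [Hx0 Hw]]. apply (unimodal_abs v W Hd' HC).
  exists x0; split; auto. rewrite <- HDer; auto.
Qed.

Theorem lemma12 (sigma eta alpha h r a : R)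
  (Hsigma : 0 < sigma) (Heta : 0 < eta) (Halpha : 0 < alpha) (Hh : 0 < h)
  (Hr : 0 <= r) :
  (a > - (alpha / 4) * r ->
     forall (beta : R) (v : R -> R), 0 <= beta ->
       is_sol sigma eta alpha h r a beta v ->
       (in_D1 beta v <-> exists x0, 0 < x0 /\ Derive v x0 < 0)) /\
  (a <= - (alpha / 4) * r ->
     forall (beta : R) (v : R -> R), beta2_low alpha r a < beta ->
       is_sol sigma eta alpha h r a beta v ->
       (in_D2 alpha r a beta v <-> exists x0, 0 < x0 /\ Derive v x0 < 0)).
Proof.
split.
- intros _ beta v Hb Hs. unfold in_D1. rewrite <- (key sigma eta alpha h r a beta v); auto. tauto.
- intros _ beta v Hb Hs. unfold in_D2. rewrite <- (key sigma eta alpha h r a beta v); auto. tauto.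
Qed.
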